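(* Let $R$ be a ring and $\mathbf x$ a parameter sequence on $R$. Then $\operatorname{ht}(\mathbf x)R\ge\ell(\mathbf x)$.
   Context: All rings are commutative with identity. For $x\in R$ let $C(x)$ be the complex $0\to R\to R_x\to 0$ ($R$ in degree $0$, natural localization map); for $\mathbf x=x_1,\dots,x_\ell$ put $C(\mathbf x)=C(x_1)\otimes_R\cdots\otimes_R C(x_\ell)$ and let $H^i_{\mathbf x}(M)$ be the $i$th cohomology of $C(\mathbf x)\otimes_RM$; $\ell(\mathbf x)=\ell$. Let $K(x)$ be $0\to R\xrightarrow{x}R\to 0$ (degrees $1,0$), $K(\mathbf x)=K(x_1)\otimes\cdots\otimes K(x_\ell)$, $H_i(\mathbf x)$ its homology. For $m\ge n$ the chain map $K(\mathbf x^m)\to K(\mathbf x^n)$ ($\mathbf x^m=x_1^m,\dots,x_\ell^m$) is the tensor product of maps given by multiplication by $x_i^{m-n}$ in degree $1$ and identity in degree $0$. $\mathbf x$ is weakly proregular if for every $n$ there is $m\ge n$ with $H_i(\mathbf x^m)\to H_i(\mathbf x^n)$ zero for all $i\ge1$. $\mathbf x$ is a parameter sequence on $R$ if it is weakly proregular, $(\mathbf x)R\neq R$, and $H^{\ell(\mathbf x)}_{\mathbf x}(R)_p\neq0$ for every prime $p\supseteq(\mathbf x)R$. *)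

(* Defs.v *)
(* Commutative rings are MathComp's [comPzRingType]
   (non-trivial commutative rings; the zero ring is excluded anyway by the
   hypothesis (x)R <> R). *)
From mathcomp Require Import all_boot all_order all_algebra.
Set Implicit Arguments. Unset Strict Implicit. Unset Printing Implicit Defensive.
Import GRing.Theory.
Local Open Scope ring_scope.

Section Defs.
Variable R : comPzRingType.

Definition ideal_gen_proper (l : nat) (x : 'I_l -> R) : Prop :=
  ~ exists r : 'I_l -> R, \sum_(i < l) r i * x i = 1.

Definition is_prime (p : R -> Prop) : Prop :=
  [/\ p 0,
      (forall a b, p a -> p b -> p (a + b)),
      (forall r a, p a -> p (r * a)),
      ~ p 1
    & (forall a b, p (a * b) -> p a \/ p b)].

Definition strict_incl (p q : R -> Prop) : Prop :=
  (forall r, p r -> q r) /\ exists r, q r /\ ~ p r.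

Definition prime_height_ge (p : R -> Prop) (n : nat) : Prop :=
  exists P : nat -> (R -> Prop),
    (forall i, (i <= n)%N -> is_prime (P i)) /\
    (forall i, (i < n)%N -> strict_incl (P i) (P i.+1)) /\
    (forall r, P n r <-> p r).

(* ht (x)R >= n : every prime containing (x)R has height >= n
   (the height of an ideal is the infimum of heights of primes containing it) *)
Definition gen_ideal_height_ge (l : nat) (x : 'I_l -> R) (n : nat) : Prop :=
  forall p, is_prime p -> (forall i, p (x i)) -> prime_height_ge p n.

(* A chain is a function on subsets S of {0..l-1} (coefficient of e_S);
   it has degree i if it vanishes off subsets of size i. *)
Definition kdeg (l : nat) (c : {set 'I_l} -> R) (i : nat) : Prop :=
  forall S : {set 'I_l}, #|S| <> i -> c S = 0.

(* d(e_S) = sum_{j in S} (-1)^{#{k in S, k<j}} x_j e_{S \ j} *)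
Definition kos_d (l : nat) (x : 'I_l -> R) (c : {set 'I_l} -> R)
  : {set 'I_l} -> R :=
  fun T => \sum_(j < l | j \notin T)
             (-1) ^+ #|[set k in T | (k < j)%N]| * x j * c (j |: T).

(* chain map K(x^m) -> K(x^n), m >= n : e_S |-> (prod_{j in S} x_j^(m-n)) e_S *)
Definition kos_trans (l : nat) (x : 'I_l -> R) (m n : nat)
  (c : {set 'I_l} -> R) : {set 'I_l} -> R :=
  fun S => (\prod_(j in S) x j ^+ (m - n)) * c S.

Definition xpow (l : nat) (x : 'I_l -> R) (m : nat) : 'I_l -> R :=
  fun j => x j ^+ m.

(* H_i(x^m) -> H_i(x^n) is zero: every i-cycle of K(x^m) maps to an
   i-boundary of K(x^n). *)
Definition koszul_map_zero (l : nat) (x : 'I_l -> R) (m n i : nat) : Prop :=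
  forall c, kdeg c i -> (forall T, kos_d (xpow x m) c T = 0) ->
    exists w, kdeg w i.+1 /\
      forall T, kos_d (xpow x n) w T = kos_trans x m n c T.

Definition weakly_proregular (l : nat) (x : 'I_l -> R) : Prop :=
  forall n, exists m, (n <= m)%N /\
    forall i, (1 <= i)%N -> koszul_map_zero x m n i.

(* C^l = R_y with y = x_1...x_l; elements a/y^k are pairs (a,k).
   H^l_x(R) = R_y / (sum_i image of R_{yhat_i} -> R_y), yhat_i = prod_{j<>i} x_j. *)
Definition ytot (l : nat) (x : 'I_l -> R) : R := \prod_(i < l) x i.

Definition frac_eq (y : R) (u v : R * nat) : Prop :=
  exists k, y ^+ k * (u.1 * y ^+ v.2 - v.1 * y ^+ u.2) = 0.

Definition frac_add (y : R) (u v : R * nat) : R * nat :=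
  (u.1 * y ^+ v.2 + v.1 * y ^+ u.2, (u.2 + v.2)%N).

(* localization map R_{yhat_i} -> R_y : c / yhat_i^k |-> c x_i^k / y^k *)
Definition loc_map (l : nat) (x : 'I_l -> R) (i : 'I_l) (u : R * nat)
  : R * nat := (u.1 * x i ^+ u.2, u.2).

Definition cech_top_boundary (l : nat) (x : 'I_l -> R) (u : R * nat) : Prop :=
  exists v : 'I_l -> R * nat,
    frac_eq (ytot x) u
      (\big[frac_add (ytot x)/(0, 0%N)]_(i < l) loc_map x i (v i)).

(* (H^l_x(R))_p <> 0 : some class h in H^l_x(R) stays nonzero in the
   localization, i.e. s*h <> 0 for all s outside p. *)
Definition top_cech_loc_nonzero (l : nat) (x : 'I_l -> R) (p : R -> Prop)
  : Prop :=
  exists u : R * nat, forall s, ~ p s ->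
    ~ cech_top_boundary x (s * u.1, u.2).

Definition parameter_sequence (l : nat) (x : 'I_l -> R) : Prop :=
  [/\ weakly_proregular x,
      ideal_gen_proper x
    & forall p, is_prime p -> (forall i, p (x i)) -> top_cech_loc_nonzero x p].

End Defs.

(* Main.v *)
Require Import Defs.
From mathcomp Require Import all_boot all_order all_algebra.
From mathcomp Require Import ring.
From mathcomp Require Import classical_sets.
From Stdlib Require Import Classical.
Set Implicit Arguments. Unset Strict Implicit. Unset Printing Implicit Defensive.
Import GRing.Theory.

Section Helpers.
Local Open Scope ring_scope.
Variable R : comPzRingType.

Lemma exists_prime (I S : R -> Prop) :
  I 0 -> (forall a b, I a -> I b -> I (a + b)) -> (forall r a, I a -> I (r * a)) ->
  S 1 -> (forall a b, S a -> S b -> S (a * b)) -> (forall r, I r -> ~ S r) ->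
  exists Q, is_prime Q /\ (forall r, I r -> Q r) /\ (forall r, Q r -> ~ S r).
Proof.
move=> I0 ID IM S1 SM IS.
pose P := fun J : R -> Prop => [/\ (forall r, J r -> ~ S r),
   (forall a b, J a -> J b -> J (a + b)), (forall r a, J a -> J (r * a))
 & ((exists r, J r) -> forall r, I r -> J r)].
have [|Q [PQ Qmax]] := @Zorn_bigcup R P.
  move=> F FP Ftot; split.
  - by move=> r [X FX Xr]; case: (FP X FX) => H _ _ _; exact: H.
  - move=> a b [X FX Xa] [Y FY Yb].
    case: (Ftot X Y FX FY) => sub.
      exists Y => //; case: (FP Y FY) => _ H _ _; exact: H (sub _ Xa) Yb.
    exists X => //; case: (FP X FX) => _ H _ _; exact: H Xa (sub _ Yb).
  - move=> r a [X FX Xa]; exists X => //; case: (FP X FX) => _ _ H _; exact: H.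
  - move=> [r0 [X FX Xr0]] r Ir; exists X => //.
    case: (FP X FX) => _ _ _ H; apply: H => //; by exists r0.
case: PQ => QS QD QM QI.
have QI' : forall r, I r -> Q r.
  case: (classic (exists r, Q r)) => [ne|em]; first exact: QI.
  exfalso; apply: (Qmax I); last by split.
  split; first by move=> t Qt; exfalso; apply: em; exists t.
  by move=> sub; apply: em; exists 0; apply: sub.
have ext : forall a, ~ Q a -> exists q r, Q q /\ S (q + r * a).
  move=> a Qa.
  pose J := fun t => exists q r, Q q /\ t = q + r * a.
  have notP : ~ P J.
    apply: Qmax; split.
      by move=> t Qt; exists t, 0; split => //; rewrite mul0r addr0.
    move=> sub; apply: Qa; apply: sub; exists 0, 1; split; last by rewrite add0r mul1r.
    exact: QI' I0.
  apply: NNPP => nex; apply: notP; split.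
  - move=> t [q [r [Qq ->]]] St; apply: nex; by exists q, r.
  - move=> u v [q1 [r1 [Q1 ->]]] [q2 [r2 [Q2 ->]]].
    exists (q1 + q2), (r1 + r2); split; [exact: QD | ring].
  - move=> r u [q1 [r1 [Q1 ->]]]; exists (r * q1), (r * r1); split; [exact: QM | ring].
  - move=> _ t It; exists t, 0; split; [exact: QI' | ring].
exists Q; split; last by split.
split.
- exact: QI' I0.
- exact: QD.
- exact: QM.
- by move=> Q1; exact: QS Q1 S1.
- move=> a b Qab.
  case: (classic (Q a)) => [|Qa]; first by left.
  case: (classic (Q b)) => [|Qb]; first by right.
  exfalso.
  have [q1 [r1 [Q1 S1']]] := ext a Qa.
  have [q2 [r2 [Q2 S2']]] := ext b Qb.
  apply: (QS _ _ (SM _ _ S1' S2')).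
  have -> : (q1 + r1 * a) * (q2 + r2 * b) =
    (q2 + r2 * b) * q1 + (r1 * a) * q2 + (r1 * r2) * (a * b) by ring.
  apply: (QD); first apply: (QD); first exact: (QM).
    exact: (QM).
  exact: QM.
Qed.


Definition bd l (x : 'I_l -> R) (a : R) (k : nat) : Prop :=
  exists M K (c : 'I_l -> R),
    ytot x ^+ K * (a * ytot x ^+ M - ytot x ^+ k * \sum_(i < l) c i * x i ^+ M) = 0.

Lemma fold_frac l (y : R) M (F : 'I_l -> R) :
  \big[frac_add y/(0, 0%N)]_(i < l) (F i, M) =
  (\sum_(i < l) F i * y ^+ (l.-1 * M), (l * M)%N).
Proof.
elim: l F => [|l IH] F; first by rewrite !big_ord0.
rewrite big_ord_recl IH big_ord_recl /frac_add /=.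
congr pair.
case: l {IH} F => [|l] F; first by rewrite !big_ord0 /= !mul0n mul0r !addr0.
rewrite mulr_suml /=; congr (_ + _); apply: eq_bigr => i _.
by rewrite -mulrA -exprD mulSn addnC.
Qed.

Lemma bd_cech l (x : 'I_l -> R) a k : bd x a k -> cech_top_boundary x (a, k).
Proof.
case=> M [K [c E]]; exists (fun i => (c i, M)).
rewrite /loc_map /= fold_frac; exists (K + M)%N => /=.
case: l x c E => [|l] x c E; set y := ytot x in E *.
  rewrite big_ord0 in E *.
  rewrite -[RHS](E) exprD big_ord0 mul0n expr0; ring.
rewrite -mulr_suml.
set S := \sum_(i < l.+1) c i * x i ^+ M in E *.
rewrite -(mulr0 (y ^+ (l.+1 * M))) -E.
rewrite /= mulSn !exprD; ring.
Qed.

Lemma bd_scale l (x : 'I_l -> R) r a k : bd x a k -> bd x (r * a) k.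
Proof.
case=> M [K [c E]]; exists M, K, (fun i => r * c i).
have -> : \sum_(i < l) r * c i * x i ^+ M = r * \sum_(i < l) c i * x i ^+ M.
  by rewrite mulr_sumr; apply: eq_bigr => i _; rewrite mulrA.
rewrite -[RHS](mulr0 r) -[X in _ = _ * X]E; ring.
Qed.

Definition yh l (x : 'I_l -> R) (t : 'I_l) := \prod_(i < l | i != t) x i.

Lemma yhE l (x : 'I_l -> R) t : x t * yh x t = ytot x.
Proof. by rewrite /ytot (bigD1 t). Qed.

Lemma bd_raise l (x : 'I_l -> R) a k M K c i j :
  ytot x ^+ K * (a * ytot x ^+ M - ytot x ^+ k * \sum_(t < l) c t * x t ^+ M) = 0 ->
  ytot x ^+ (K + i) * (a * ytot x ^+ (M + j) - ytot x ^+ k *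
     \sum_(t < l) (c t * yh x t ^+ j) * x t ^+ (M + j)) = 0.
Proof.
move=> E.
have -> : \sum_(t < l) (c t * yh x t ^+ j) * x t ^+ (M + j) =
   ytot x ^+ j * \sum_(t < l) c t * x t ^+ M.
  rewrite mulr_sumr; apply: eq_bigr => t _.
  by rewrite -(yhE x t) exprMn exprD; ring.
rewrite -[RHS](mulr0 (ytot x ^+ (i + j))) -[X in _ = _ * X]E !exprD; ring.
Qed.

Lemma bd_add l (x : 'I_l -> R) a b k : bd x a k -> bd x b k -> bd x (a + b) k.
Proof.
case=> M1 [K1 [c1 E1]] [M2 [K2 [c2 E2]]].
have F1 := bd_raise K2 M2 E1.
have F2 := bd_raise K1 M1 E2.
rewrite [(K2 + K1)%N]addnC [(M2 + M1)%N]addnC in F2.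
exists (M1 + M2)%N, (K1 + K2)%N,
  (fun t => c1 t * yh x t ^+ M2 + c2 t * yh x t ^+ M1).
have -> : \sum_(t < l) (c1 t * yh x t ^+ M2 + c2 t * yh x t ^+ M1) * x t ^+ (M1 + M2)
  = \sum_(t < l) (c1 t * yh x t ^+ M2) * x t ^+ (M1 + M2) +
    \sum_(t < l) (c2 t * yh x t ^+ M1) * x t ^+ (M1 + M2).
  by rewrite -big_split; apply: eq_bigr => t _; rewrite mulrDl.
move: F1 F2.
set S1 := \sum_(t < l) _; set S2 := \sum_(t < l) _ => F1 F2.
rewrite -[RHS](addr0 0) -[X in _ = X + _]F1 -[X in _ = _ + X]F2; ring.
Qed.


Lemma prime_pow (p : R -> Prop) r n : is_prime p -> p (r ^+ n) -> p r.
Proof.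
move=> pp; elim: n => [|n IH]; first by rewrite expr0; case: pp.
rewrite exprS => H; case: pp => _ _ _ _ /(_ _ _ H) [] //; exact: IH.
Qed.

Lemma notp1 (p : R -> Prop) : is_prime p -> ~ p 1.
Proof. by case. Qed.

Lemma notpM (p : R -> Prop) a b : is_prime p -> ~ p a -> ~ p b -> ~ p (a * b).
Proof. by case=> _ _ _ _ H pa pb /H []. Qed.

Lemma main l : forall (x : 'I_l -> R) p a k, is_prime p -> (forall i, p (x i)) ->
  (forall s, ~ p s -> ~ bd x (s * a) k) -> prime_height_ge p l.
Proof.
elim: l => [|l IH] x p a k pp px NZ.
  by exists (fun _ => p); split; [move=> i _ | split; [move=> i | ]].
pose x' := fun i : 'I_l => x (widen_ord (leqnSn l) i).
pose z := x ord_max.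
have yE : ytot x = ytot x' * z by rewrite /ytot big_ord_recr.
have wl : forall i : 'I_l, widen_ord (leqnSn l) i = lift ord_max i.
  by move=> i; apply: val_inj; rewrite /= /bump leqNgt ltn_ord.
have A : forall s n, ~ p s -> ~ bd x' (s * z ^+ n * a) k.
  move=> s n ps [M [K [c E]]]; apply: (NZ s ps).
  exists (M + n + k)%N, K, (fun i => if unlift ord_max i is Some j
                   then c j * z ^+ M * yh x' j ^+ (n + k) else 0).
  rewrite big_ord_recr /= unlift_none mul0r addr0.
  rewrite (eq_bigr (fun i => z ^+ M * ytot x' ^+ (n + k) * (c i * x' i ^+ M))); last first.
    move=> i _; rewrite wl liftK -(yhE x' i) -wl -/(x' i) exprMn !exprD; ring.
  rewrite -mulr_sumr.
  move: E; set S := \sum_(i < l) _ => E.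
  rewrite yE -(mulr0 (z ^+ (K + M + k) * ytot x' ^+ (n + k))) -E !exprMn !exprD; ring.
pose I := fun r => exists s n, ~ p s /\ bd x' (r * s * z ^+ n * a) k.
pose S' := fun t => exists s n, ~ p s /\ t = s * z ^+ n.
have [Q [Qp [IQ QS]]] : exists Q, is_prime Q /\ (forall r, I r -> Q r) /\ (forall r, Q r -> ~ S' r).
  apply: exists_prime.
  - exists 1, 0%N; split; first exact: notp1.
    exists 0%N, 0%N, (fun _ => 0); rewrite big1 => [|i _]; last by rewrite mul0r.
    ring.
  - move=> u v [s1 [n1 [p1 B1]]] [s2 [n2 [p2 B2]]]; exists (s1 * s2), (n1 + n2)%N.
    split; first exact: notpM.
    have -> : (u + v) * (s1 * s2) * z ^+ (n1 + n2) * a =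
      s2 * z ^+ n2 * (u * s1 * z ^+ n1 * a) + s1 * z ^+ n1 * (v * s2 * z ^+ n2 * a).
      by rewrite exprD; ring.
    by apply: bd_add; apply: bd_scale.
  - move=> r u [s [n [ps B]]]; exists s, n; split => //.
    have -> : r * u * s * z ^+ n * a = r * (u * s * z ^+ n * a) by ring.
    exact: bd_scale.
  - exists 1, 0%N; split; [exact: notp1 | by rewrite expr0 mulr1].
  - move=> u v [s1 [n1 [p1 ->]]] [s2 [n2 [p2 ->]]]; exists (s1 * s2), (n1 + n2)%N.
    split; first exact: notpM.
    by rewrite exprD; ring.
  - move=> r [s [n [ps B]]] [s0 [n0 [ps0 E0]]].
    apply: (A (s0 * s) (n0 + n)); first exact: notpM.
    have <- : r * s * z ^+ n * a = s0 * s * z ^+ (n0 + n) * a by rewrite E0 exprD; ring.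
    exact: B.
have Qsubp : forall r, Q r -> p r.
  move=> r Qr; apply: NNPP => pr; apply: (QS r Qr); exists r, 0%N; split => //.
  by rewrite expr0 mulr1.
have Qz : ~ Q z.
  move=> Qz; apply: (QS z Qz); exists 1, 1%N; split; [exact: notp1 | by rewrite expr1 mul1r].
have Qx : forall i, Q (x' i).
  move=> i; apply: (@prime_pow _ _ k Qp); apply: IQ.
  exists 1, 0%N; split; first exact: notp1.
  exists k, 0%N, (fun j => if j == i then a else 0).
  rewrite (bigD1 i) //= eqxx big1 => [|j /negbTE ->]; last by rewrite mul0r.
  ring.
have NZQ : forall t, ~ Q t -> ~ bd x' (t * a) k.
  move=> t Qt B; apply: Qt; apply: IQ; exists 1, 0%N; split; first exact: notp1.
  by rewrite expr0 !mulr1.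
have [P [Pp [Ps Pe]]] := IH x' Q a k Qp Qx NZQ.
exists (fun i => if (i <= l)%N then P i else p); split; [|split].
- move=> i _; case: ifP => h; [exact: Pp | exact: pp].
- move=> i; rewrite ltnS => il; rewrite il.
  case: (ltnP i l) => h.
    exact: Ps.
  have -> : i = l by apply/eqP; rewrite eqn_leq il h.
  split; first by move=> r /Pe; apply: Qsubp.
  exists z; split; [exact: px | by move/Pe].
- by move=> r; rewrite ltnn.
Qed.

End Helpers.

Theorem proposition3p5 (R : comPzRingType) (l : nat) (x : 'I_l -> R) :
  parameter_sequence x -> gen_ideal_height_ge x l.
Proof.
case=> _ _ Hc p pp px.
have [[a k] Hu] := Hc p pp px.
apply: (main (a := a) (k := k) pp px) => s ps /bd_cech; exact: Hu s ps.
Qed.
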